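(* In the linear setting of the context, let $(\mathbf c(t),v(t),\phi(t))$ be a solution of the linear pump-leak system. Then $$\frac{d\tilde G}{dt}=-J,\qquad J=\langle\boldsymbol\mu+\mathbf q,L(\boldsymbol\mu+\mathbf q)\rangle_{\mathbb R^N}+\zeta\pi_{\rm w}^2=\langle\boldsymbol\gamma+\mathbf q,\hat L(\boldsymbol\gamma+\mathbf q)\rangle_{\mathbb R^N}+\zeta\pi_{\rm w}^2,$$ where $$\tilde G(\mathbf c,v)=v\sum_{k=1}^N\Big(c_k\big(\ln(c_k/c_k^{\rm e})-1+q_k\big)+c_k^{\rm e}\Big)+A\Big(\ln\frac{A}{v}-1\Big).$$ In particular $\tilde G$ is non-increasing along solutions.
   Context: Fix an integer $N\ge2$, real valences $z_1,\dots,z_N$ not all zero, $\mathbf z=(z_1,\dots,z_N)^T$, positive constants $c_k^{\rm e}$ with $\sum_kz_kc_k^{\rm e}=0$, $A>0$, $z\in\mathbb R$. Let $L$ be a real symmetric positive definite $N\times N$ matrix, $\mathbf p\in\mathbb R^N$ constant, $\zeta>0$, $\mathbf q=L^{-1}\mathbf p$. For $\mathbf c\in(0,\infty)^N$, $v>0$, $\phi\in\mathbb R$: $\gamma_k=\ln(c_k/c_k^{\rm e})$, $\boldsymbol\gamma=(\gamma_k)$, $\mu_k=\gamma_k+z_k\phi$, $\pi_{\rm w}=\sum_kc_k^{\rm e}-(\sum_kc_k+A/v)$. The linear pump-leak system is $\frac{d}{dt}(v\mathbf c)=-L\boldsymbol\mu-\mathbf p$, $0=\sum_kz_kc_k+zA/v$,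 $\frac{dv}{dt}=-\zeta\pi_{\rm w}$; a solution is a triple with $\mathbf c(t)\in(0,\infty)^N$, $v(t)>0$ of class $C^1$ and $\phi(t)$ continuous satisfying these equations. $\hat L$ is the $N\times N$ matrix $\hat L=L-\frac{(L\mathbf z)(L\mathbf z)^T}{\langle\mathbf z,L\mathbf z\rangle}$. (Along solutions, the electroneutrality constraint forces $\phi=-\langle\mathbf z,L\boldsymbol\gamma+\mathbf p\rangle/\langle\mathbf z,L\mathbf z\rangle$.) *)

(* Defs.v *)
From Stdlib Require Import Reals Lra.
Open Scope R_scope.

(* Vectors in R^N are functions nat -> R (only indices 0..N-1 matter);
   N x N matrices are functions nat -> nat -> R. *)

Fixpoint sumN (n : nat) (f : nat -> R) : R :=
  match n with
  | O => 0
  | S m => sumN m f + f m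
  end.

Definition dot (N : nat) (x y : nat -> R) : R := sumN N (fun k => x k * y k).

Definition matvec (N : nat) (M : nat -> nat -> R) (x : nat -> R) : nat -> R :=
  fun i => sumN N (fun j => M i j * x j).

Definition symmetric (N : nat) (M : nat -> nat -> R) : Prop :=
  forall i j, (i < N)%nat -> (j < N)%nat -> M i j = M j i.

Definition pos_def (N : nat) (M : nat -> nat -> R) : Prop :=
  forall x : nat -> R, (exists i, (i < N)%nat /\ x i <> 0) ->
    0 < dot N x (matvec N M x).

Definition Lhat (N : nat) (L : nat -> nat -> R) (z : nat -> R) : nat -> nat -> R :=
  fun i j => L i j - matvec N L z i * matvec N L z j / dot N z (matvec N L z).

Definition gam (ce c : nat -> R) : nat -> R := fun k => ln (c k / ce k).

Definition mu (ce c z : nat -> R) (phi : R) : nat -> R :=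
  fun k => gam ce c k + z k * phi.

Definition piw (N : nat) (ce c : nat -> R) (A v : R) : R :=
  sumN N ce - (sumN N c + A / v).

Definition Gtilde (N : nat) (ce q : nat -> R) (A : R) (c : nat -> R) (v : R) : R :=
  v * sumN N (fun k => c k * (ln (c k / ce k) - 1 + q k) + ce k)
  + A * (ln (A / v) - 1).

Definition vadd (x y : nat -> R) : nat -> R := fun k => x k + y k.

(* Main.v *)
Require Import Defs.
From Stdlib Require Import Reals Lra Lia Classical FunctionalExtensionality.
Open Scope R_scope.

Lemma sumN_ext n f g : (forall k, (k < n)%nat -> f k = g k) -> sumN n f = sumN n g.
Proof. induction n; simpl; intros H; [reflexivity|]. rewrite IHn by (intros; apply H; lia). rewrite H by lia. reflexivity. Qed.

Lemma sumN_lin n a b f g : sumN n (fun k => a * f k + b * g k) = a * sumN n f + b * sumN n g.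
Proof. induction n; simpl; [ring|]. rewrite IHn. ring. Qed.

Lemma sumN_plus n f g : sumN n (fun k => f k + g k) = sumN n f + sumN n g.
Proof. induction n; simpl; [ring|]. rewrite IHn. ring. Qed.

Lemma sumN_scal n a f : sumN n (fun k => a * f k) = a * sumN n f.
Proof. induction n; simpl; [ring|]. rewrite IHn. ring. Qed.

Lemma sumN_zero n f : (forall k, (k<n)%nat -> f k = 0) -> sumN n f = 0.
Proof. intros H. rewrite (sumN_ext n f (fun _ => 0)) by assumption. induction n; simpl; [ring|]. rewrite IHn by (intros; apply H; lia). ring. Qed.

Lemma sumN_swap n m (f : nat -> nat -> R) :
  sumN n (fun i => sumN m (fun j => f i j)) = sumN m (fun j => sumN n (fun i => f i j)).
Proof. induction n; simpl.
- symmetry. apply sumN_zero. reflexivity.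
- rewrite IHn. rewrite <- sumN_plus. reflexivity. Qed.

Lemma dot_comm N x y : dot N x y = dot N y x.
Proof. unfold dot. apply sumN_ext. intros; ring. Qed.

Lemma dot_sym N L x y : symmetric N L -> dot N x (matvec N L y) = dot N y (matvec N L x).
Proof. intros HS. unfold dot, matvec.
 transitivity (sumN N (fun i => sumN N (fun j => x i * L i j * y j))).
 - apply sumN_ext; intros. rewrite <- sumN_scal. apply sumN_ext; intros; ring.
 - rewrite sumN_swap. apply sumN_ext; intros j Hj. rewrite <- sumN_scal. apply sumN_ext; intros i Hi.
   rewrite (HS i j) by assumption. ring. Qed.

Lemma matvec_lin N L x y a i : matvec N L (fun k => x k - a * y k) i = matvec N L x i - a * matvec N L y i.
Proof. unfold matvec. rewrite (sumN_ext N _ (fun j => 1 * (L i j * x j) + (-a) * (L i j * y j))) by (intros; ring).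
 rewrite sumN_lin. ring. Qed.

Lemma matvec_add N L x y i : matvec N L (vadd x y) i = matvec N L x i + matvec N L y i.
Proof. unfold matvec, vadd. rewrite <- sumN_plus. apply sumN_ext; intros; ring. Qed.

Lemma dot_lin N x y w a : dot N (fun k => x k - a * y k) w = dot N x w - a * dot N y w.
Proof. unfold dot. rewrite (sumN_ext N _ (fun k => 1 * (x k * w k) + (-a) * (y k * w k))) by (intros; ring).
 rewrite sumN_lin. ring. Qed.

Lemma dot_ext2 N x y w : (forall k, (k<N)%nat -> y k = w k) -> dot N x y = dot N x w.
Proof. intros H. unfold dot. apply sumN_ext; intros. rewrite H; auto. Qed.

Lemma dpl_local f g x l a b : a < x < b -> (forall s, a < s < b -> f s = g s) ->
  derivable_pt_lim f x l -> derivable_pt_lim g x l.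
Proof. intros Hx Hfg H eps Heps. destruct (H eps Heps) as [d Hd].
 assert (Hp : 0 < Rmin d (Rmin (x - a) (b - x))).
 { destruct d as [d dp]. simpl. repeat apply Rmin_pos; lra. }
 exists (mkposreal _ Hp). intros h Hh Hlt. simpl in Hlt.
 assert (h1 : Rabs h < d) by (eapply Rlt_le_trans; [exact Hlt| apply Rmin_l]).
 assert (h2 : Rabs h < Rmin (x-a) (b-x)) by (eapply Rlt_le_trans; [exact Hlt| apply Rmin_r]).
 assert (h3 : Rabs h < x - a) by (eapply Rlt_le_trans; [exact h2| apply Rmin_l]).
 assert (h4 : Rabs h < b - x) by (eapply Rlt_le_trans; [exact h2| apply Rmin_r]).
 rewrite <- (Hfg (x+h)). rewrite <- (Hfg x) by lra. apply Hd; auto.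
 apply Rabs_def2 in h3. apply Rabs_def2 in h4. lra. Qed.

Lemma dpl_plus f g x a b : derivable_pt_lim f x a -> derivable_pt_lim g x b ->
  derivable_pt_lim (fun s => f s + g s) x (a + b).
Proof. intros; apply (derivable_pt_lim_plus f g); auto. Qed.

Lemma dpl_mult f g x a b : derivable_pt_lim f x a -> derivable_pt_lim g x b ->
  derivable_pt_lim (fun s => f s * g s) x (a * g x + f x * b).
Proof. intros; apply (derivable_pt_lim_mult f g); auto. Qed.

Lemma dpl_const a x : derivable_pt_lim (fun _ => a) x 0.
Proof. apply derivable_pt_lim_const. Qed.

Lemma dpl_ln f x a : 0 < f x -> derivable_pt_lim f x a -> derivable_pt_lim (fun s => ln (f s)) x (/ f x * a).
Proof. intros Hp H. apply (derivable_pt_lim_comp f ln); auto. apply derivable_pt_lim_ln; auto. Qed.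

Lemma dpl_sumN n (F : R -> nat -> R) dF x :
  (forall k, (k < n)%nat -> derivable_pt_lim (fun s => F s k) x (dF k)) ->
  derivable_pt_lim (fun s => sumN n (F s)) x (sumN n dF).
Proof. induction n; simpl; intros H. apply dpl_const.
 apply dpl_plus. apply IHn; intros; apply H; lia. apply H; lia. Qed.

Lemma dpl_summand (f : R -> R) df x e qq : 0 < f x -> 0 < e -> derivable_pt_lim f x df ->
  derivable_pt_lim (fun s => f s * (ln (f s / e) - 1 + qq) + e) x (df * (ln (f x / e) + qq)).
Proof. intros Hf He H.
 assert (H1 : derivable_pt_lim (fun s => f s / e) x (df * / e + f x * 0)).
 { unfold Rdiv. apply (dpl_mult f (fun _ => / e)); auto. apply dpl_const. }
 assert (H2 := dpl_ln (fun s => f s / e) x _ ltac:(apply Rdiv_lt_0_compat; auto) H1).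
 assert (H3 : derivable_pt_lim (fun s => ln (f s / e) - 1 + qq) x (/ (f x / e) * (df * / e + f x * 0) - 0 + 0)).
 { apply dpl_plus. apply (derivable_pt_lim_minus (fun s => ln (f s / e)) (fun _ => 1)); auto. apply dpl_const. apply dpl_const. }
 assert (H4 := dpl_plus _ _ x _ _ (dpl_mult _ _ x _ _ H H3) (dpl_const e x)).
 simpl in H4. replace (df * (ln (f x / e) + qq)) with
   (df * (ln (f x / e) - 1 + qq) + f x * (/ (f x / e) * (df * / e + f x * 0) - 0 + 0) + 0); auto.
 field. split; lra. Qed.

Lemma dpl_logterm (v : R -> R) dv x A : 0 < A -> 0 < v x -> derivable_pt_lim v x dv ->
  derivable_pt_lim (fun s => A * (ln (A / v s) - 1)) x (- A * dv / v x).
Proof. intros HA Hv H.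
 assert (H1 : derivable_pt_lim (fun s => A / v s) x ((0 * v x - dv * A) / (v x)²)).
 { apply (derivable_pt_lim_div (fun _ => A) v); auto. apply dpl_const. lra. }
 assert (H2 := dpl_ln (fun s => A / v s) x _ ltac:(apply Rdiv_lt_0_compat; auto) H1).
 assert (H3 := dpl_mult _ _ x _ _ (dpl_const A x)
   (derivable_pt_lim_minus (fun s => ln (A / v s)) (fun _ => 1) x _ _ H2 (dpl_const 1 x))).
 simpl in H3. replace (- A * dv / v x) with
  (0 * (ln (A / v x) - 1) + A * (/ (A / v x) * ((0 * v x - dv * A) / (v x)²) - 0)); auto.
 unfold Rsqr. field. split; lra. Qed.

Lemma dot_lin2 N g x y r : dot N g (fun i => x i - y i * r) = dot N g x - r * dot N g y.
Proof. unfold dot. rewrite (sumN_ext N _ (fun k => 1 * (g k * x k) + (-r) * (g k * y k))) by (intros; ring).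
 rewrite sumN_lin. ring. Qed.

Lemma dot_linr N w x y a : dot N w (fun k => x k - a * y k) = dot N w x - a * dot N w y.
Proof. unfold dot. rewrite (sumN_ext N _ (fun k => 1 * (w k * x k) + (-a) * (w k * y k))) by (intros; ring).
 rewrite sumN_lin. ring. Qed.

Lemma Lhat_eq N L z m P : symmetric N L ->
  dot N z (matvec N L z) <> 0 ->
  dot N z (matvec N L m) = 0 ->
  dot N (fun k => m k - P * z k) (matvec N (Lhat N L z) (fun k => m k - P * z k))
  = dot N m (matvec N L m).
Proof. intros HS Hd HK.
 set (g := fun k => m k - P * z k).
 set (Lz := matvec N L z). set (d := dot N z Lz).
 assert (Hd' : d <> 0) by exact Hd.
 assert (E1 : forall i, matvec N (Lhat N L z) g i = matvec N L g i - Lz i * (dot N Lz g / d)).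
 { intros i. unfold matvec at 1, Lhat. fold Lz. fold d.
   rewrite (sumN_ext N _ (fun j => 1 * (L i j * g j) + (-(Lz i / d)) * (Lz j * g j))).
   2:{ intros. field. exact Hd'. }
   rewrite sumN_lin. unfold matvec, dot. field. exact Hd'. }
 rewrite (dot_ext2 N g _ _ (fun k _ => E1 k)). rewrite dot_lin2.
 assert (E2 : forall i, matvec N L g i = matvec N L m i - P * Lz i) by (intros; apply matvec_lin).
 rewrite (dot_ext2 N g _ _ (fun k _ => E2 k)).
 assert (Hmz : dot N m Lz = 0) by (unfold Lz; rewrite dot_sym by exact HS; exact HK).
 assert (e1 : dot N g (fun k => matvec N L m k - P * Lz k) = dot N m (matvec N L m) + P * P * d).
 { unfold g. rewrite dot_lin. rewrite !dot_linr. rewrite Hmz. fold d. rewrite HK. ring. }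
 assert (e2 : dot N Lz g = - P * d).
 { rewrite dot_comm. unfold g. rewrite dot_lin. rewrite Hmz. fold d. ring. }
 rewrite e1. assert (e3 : dot N g Lz = - P * d) by (rewrite dot_comm; exact e2). transitivity (dot N m (matvec N L m) + P * P * d - (- P * d) / d * (- P * d)). { f_equal. f_equal. f_equal. exact e2. exact e3. } field. exact Hd. Qed.

Theorem lemma3
  (N : nat) (HN : (2 <= N)%nat)
  (z ce : nat -> R) (A zv : R) (L : nat -> nat -> R) (p q : nat -> R) (zeta : R)
  (Hz : exists k, (k < N)%nat /\ z k <> 0)
  (Hce : forall k, (k < N)%nat -> 0 < ce k)
  (Hneutral_e : sumN N (fun k => z k * ce k) = 0)
  (HA : 0 < A)
  (HLsym : symmetric N L) (HLpd : pos_def N L)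
  (Hzeta : 0 < zeta)
  (Hq : forall i, (i < N)%nat -> matvec N L q i = p i)   (* q = L^{-1} p *)
  (a b : R) (Hab : a < b)
  (c : R -> nat -> R) (v : R -> R) (phi : R -> R)
  (dc : R -> nat -> R) (dv : R -> R)
  (Hcpos : forall t, a < t < b -> forall k, (k < N)%nat -> 0 < c t k)
  (Hvpos : forall t, a < t < b -> 0 < v t)
  (Hdc : forall t, a < t < b -> forall k, (k < N)%nat ->
           derivable_pt_lim (fun s => c s k) t (dc t k))
  (Hdc_cont : forall t, a < t < b -> forall k, (k < N)%nat ->
           continuity_pt (fun s => dc s k) t)
  (Hdv : forall t, a < t < b -> derivable_pt_lim v t (dv t))
  (Hdv_cont : forall t, a < t < b -> continuity_pt dv t)
  (Hphi : forall t, a < t < b -> continuity_pt phi t)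
  (Hflux : forall t, a < t < b -> forall k, (k < N)%nat ->
      derivable_pt_lim (fun s => v s * c s k) t
        (- matvec N L (mu ce (c t) z (phi t)) k - p k))
  (Hneutral : forall t, a < t < b ->
      sumN N (fun k => z k * c t k) + zv * A / v t = 0)
  (Hwater : forall t, a < t < b ->
      dv t = - zeta * piw N ce (c t) A (v t)) :
  (forall t, a < t < b ->
     let m := vadd (mu ce (c t) z (phi t)) q in
     let g := vadd (gam ce (c t)) q in
     let pw := piw N ce (c t) A (v t) in
     derivable_pt_lim (fun s => Gtilde N ce q A (c s) (v s)) t
       (- (dot N m (matvec N L m) + zeta * pw ^ 2))
     /\ dot N m (matvec N L m) + zeta * pw ^ 2
        = dot N g (matvec N (Lhat N L z) g) + zeta * pw ^ 2)
  /\ (forall s t, a < s -> s <= t -> t < b ->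
        Gtilde N ce q A (c t) (v t) <= Gtilde N ce q A (c s) (v s)).
Proof.
  assert (Hd : dot N z (matvec N L z) <> 0).
  { apply Rgt_not_eq. apply HLpd. exact Hz. }
  assert (Hpt : forall t, a < t < b ->
     let m := vadd (mu ce (c t) z (phi t)) q in
     let g := vadd (gam ce (c t)) q in
     let pw := piw N ce (c t) A (v t) in
     derivable_pt_lim (fun s => Gtilde N ce q A (c s) (v s)) t
       (- (dot N m (matvec N L m) + zeta * pw ^ 2))
     /\ dot N m (matvec N L m) + zeta * pw ^ 2
        = dot N g (matvec N (Lhat N L z) g) + zeta * pw ^ 2).
  { intros t Ht m g pw.
    set (F := fun k => - matvec N L (mu ce (c t) z (phi t)) k - p k).
    assert (Hprod : forall k, (k < N)%nat -> dv t * c t k + v t * dc t k = F k).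
    { intros k Hk. apply (uniqueness_limite (fun s => v s * c s k) t).
      - apply (dpl_mult v (fun s => c s k)); auto.
      - apply Hflux; auto. }
    assert (HF : forall k, (k < N)%nat -> F k = - matvec N L m k).
    { intros k Hk. unfold F, m. rewrite matvec_add, Hq by auto. ring. }
    assert (Hzs : sumN N (fun k => z k * F k) = 0).
    { assert (D1 : derivable_pt_lim (fun s => sumN N (fun k => z k * (v s * c s k))) t
                 (sumN N (fun k => 0 * (v t * c t k) + z k * F k))).
      { apply (dpl_sumN N (fun s k => z k * (v s * c s k))). intros k Hk.
        apply (dpl_mult (fun _ => z k) (fun s => v s * c s k)). apply dpl_const.
        apply Hflux; auto. }
      assert (Eq : forall s, a < s < b -> sumN N (fun k => z k * (v s * c s k)) = - (zv * A)).
      { intros s Hs.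
        rewrite (sumN_ext N _ (fun k => v s * (z k * c s k))) by (intros; ring).
        rewrite sumN_scal. assert (E := Hneutral s Hs). assert (Vp := Hvpos s Hs).
        replace (sumN N (fun k => z k * c s k)) with (- (zv * A / v s)) by lra.
        field. lra. }
      assert (D2 := dpl_local _ (fun _ => - (zv * A)) _ _ _ _ Ht Eq D1).
      assert (E := uniqueness_limite _ _ _ _ D2 (dpl_const _ t)).
      rewrite <- E. apply sumN_ext. intros; ring. }
    assert (HK : dot N z (matvec N L m) = 0).
    { unfold dot. rewrite (sumN_ext N _ (fun k => -1 * (z k * F k))).
      2:{ intros k Hk. rewrite HF by auto. ring. }
      rewrite sumN_scal, Hzs. ring. }
    split.
    2:{ f_equal. unfold g.
      replace (vadd (gam ce (c t)) q) with (fun k => m k - phi t * z k).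
      2:{ apply functional_extensionality. intros k. unfold m, vadd, mu. ring. }
      symmetry. apply Lhat_eq; auto. }
    assert (Vp := Hvpos t Ht).
    set (gg := fun k => ln (c t k / ce k) + q k).
    assert (DG : derivable_pt_lim (fun s => Gtilde N ce q A (c s) (v s)) t
       (dv t * sumN N (fun k => c t k * (ln (c t k / ce k) - 1 + q k) + ce k)
        + v t * sumN N (fun k => dc t k * gg k) + (- A * dv t / v t))).
    { unfold Gtilde. apply dpl_plus.
      - apply (dpl_mult v (fun s => sumN N (fun k => c s k * (ln (c s k / ce k) - 1 + q k) + ce k))).
        + auto.
        + apply (dpl_sumN N (fun s k => c s k * (ln (c s k / ce k) - 1 + q k) + ce k)).
          intros k Hk. apply (dpl_summand (fun s => c s k)); auto.
      - apply dpl_logterm; auto. }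
    assert (Eq1 : v t * sumN N (fun k => dc t k * gg k)
                  = sumN N (fun k => F k * gg k) - dv t * sumN N (fun k => c t k * gg k)).
    { rewrite <- sumN_scal.
      rewrite (sumN_ext N _ (fun k => 1 * (F k * gg k) + (- dv t) * (c t k * gg k))).
      2:{ intros k Hk. rewrite <- (Hprod k Hk). ring. }
      rewrite sumN_lin. ring. }
    assert (Eq2 : sumN N (fun k => c t k * (ln (c t k / ce k) - 1 + q k) + ce k)
                  = sumN N (fun k => c t k * gg k) - sumN N (c t) + sumN N ce).
    { rewrite sumN_plus.
      rewrite (sumN_ext N (fun k => c t k * _) (fun k => 1 * (c t k * gg k) + (-1) * c t k)).
      2:{ intros; unfold gg; ring. }
      rewrite sumN_lin. ring. }
    assert (Eq3 : sumN N (fun k => F k * gg k) = - dot N m (matvec N L m)).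
    { unfold dot. rewrite (sumN_ext N _ (fun k => (-1) * (m k * matvec N L m k) + phi t * (z k * matvec N L m k))).
      2:{ intros k Hk. rewrite HF by auto. unfold gg, m, vadd, mu, gam. ring. }
      rewrite sumN_lin. unfold dot in HK. rewrite HK. ring. }
    assert (Hw := Hwater t Ht). fold pw in Hw.
    replace (- (dot N m (matvec N L m) + zeta * pw ^ 2)) with
       (dv t * sumN N (fun k => c t k * (ln (c t k / ce k) - 1 + q k) + ce k)
        + v t * sumN N (fun k => dc t k * gg k) + (- A * dv t / v t)); [exact DG|].
    rewrite Eq1, Eq2, Eq3, Hw. unfold pw, piw. field. lra. }
  split; [exact Hpt|].
  assert (Hnn : forall y, 0 <= dot N y (matvec N L y)).
  { intros y. destruct (classic (exists i, (i < N)%nat /\ y i <> 0)) as [H|H].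
    - left. apply HLpd. exact H.
    - right. symmetry. unfold dot. apply sumN_zero. intros k Hk.
      destruct (Req_dec (y k) 0) as [E|E]. rewrite E; ring.
      exfalso. apply H. exists k. auto. }
  intros s t Hs Hst Ht.
  destruct (Rle_lt_or_eq_dec s t Hst) as [Hlt|<-]; [|lra].
  destruct (MVT_cor2 (fun x => Gtilde N ce q A (c x) (v x))
     (fun x => - (dot N (vadd (mu ce (c x) z (phi x)) q) (matvec N L (vadd (mu ce (c x) z (phi x)) q))
                  + zeta * piw N ce (c x) A (v x) ^ 2)) s t Hlt) as [x [Ex Hx]].
  { intros x Hx. apply (proj1 (Hpt x ltac:(lra))). }
  assert (J1 := Hnn (vadd (mu ce (c x) z (phi x)) q)).
  assert (J2 : 0 <= zeta * piw N ce (c x) A (v x) ^ 2).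
  { apply Rmult_le_pos; [lra|]. apply pow2_ge_0. }
  assert (0 <= (dot N (vadd (mu ce (c x) z (phi x)) q) (matvec N L (vadd (mu ce (c x) z (phi x)) q))
                  + zeta * piw N ce (c x) A (v x) ^ 2) * (t - s)).
  { apply Rmult_le_pos; lra. }
  lra.
Qed.
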